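(* Let $\mathbb{F}$, $\mathfrak g$, $\mathcal C$, $\mathcal C^{du}$, $M$, $Lie(\cdot)$ be as in the context. The following are equivalent: (i) the pair $\mathcal C,\mathcal C^{du}$ is very good for integrating $\mathfrak g$; (ii) the pair is good for integrating $\mathfrak g$ and $Lie(M^\times)=Lie(M)$; (iii) the pair is good for integrating $\mathfrak g$ and the unit group $M^\times$ is Zariski dense in $M$.
   Context: Let $\mathbb F$ be a field of characteristic $0$, $\mathfrak g$ a Lie algebra over $\mathbb F$. $\mathcal C$: full subcategory of $\mathfrak g$-modules closed under isomorphism and submodules, containing a direct sum and tensor product of any two objects and a one-dimensional trivial module, with only $0\in\mathfrak g$ acting trivially on all objects. $x_V$ = action. Category of duals: point-separating $V^{du}\subseteq V^*$ with $\phi\circ x_V\in V^{du}$ ($x\in\mathfrak g$), $\psi\circ\alpha\in V^{du}$ for morphisms $\alpha:V\to W$, $\psi\in W^{du}$, $(V\oplus W)^{du}=V^{du}\oplus W^{du}$, $V^{du}\otimes W^{du}\subseteq(V\otimes W)^{du}$. $End_{V^{du}}(V)=\{\varphi:\phi\circ\varphi\in V^{du}\ \forall\phi\}$. $Nat$: families $(m_V)_V$, $m_V\in End_{V^{du}}(V)$, commuting with all morphisms. $M=\{m\in Nat:m_{V\otimes W}=m_V\otimes m_W,\ m_{V_0}=id$ for trivial one-dimensional $V_0\}$, $M^\times$ its unit group. $\mathbb F[M]$: the matrix coefficients $f_{\phi v}(m)=\phi(m_Vv)$; Zariski topology on $M$: closed sets are common zero sets of subsets of $\mathbb F[M]$.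 $Lie(M)=\{x\in Nat:x_{V\otimes W}=x_V\otimes id+id\otimes x_W,\ x_{V_0}=0,\ \exists\,\delta_x:\mathbb F[M]\to\mathbb F$ with $\delta_x(f_{\phi v})=\phi(x_Vv)\}$. For a submonoid $N\subseteq M$ with vanishing ideal $I(N)\subseteq\mathbb F[M]$, $Lie(N)=\{x\in Lie(M):\delta_x(I(N))=0\}$. Identify $\mathfrak g$ with $\{(x_V)_V:x\in\mathfrak g\}\subseteq Nat$. Good for integrating: $\mathfrak g\subseteq Lie(M)$; very good: $\mathfrak g\subseteq Lie(M^\times)$. *)

(* Defs.v *)
From HB Require Import structures.
From mathcomp Require Import all_boot all_order all_algebra.
Set Implicit Arguments. Unset Strict Implicit. Unset Printing Implicit Defensive.
Import Order.TTheory GRing.Theory Num.Theory.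
Local Open Scope ring_scope.

Record lieAlg (F : fieldType) := LieAlg {
  lie_carrier :> lmodType F;
  bracket : lie_carrier -> lie_carrier -> lie_carrier;
  bracket_linl : forall y, linear (bracket ^~ y);
  bracket_linr : forall x, linear (bracket x);
  bracket_alt : forall x, bracket x x = 0;
  bracket_jacobi : forall x y z,
    bracket x (bracket y z) + bracket y (bracket z x) + bracket z (bracket x y) = 0
}.

Record gmod (F : fieldType) (g : lieAlg F) := GMod {
  gcarrier :> lmodType F;
  gact : g -> gcarrier -> gcarrier;
  gact_linl : forall v, linear (gact ^~ v);
  gact_linr : forall x, linear (gact x);
  gact_bracket : forall x y v,
    gact (bracket x y) v = gact x (gact y v) - gact y (gact x v)
}.

Section Modules.
Variables (F : fieldType) (g : lieAlg F).
Local Notation gmod := (gmod g).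

Definition ghom (V W : gmod) (f : V -> W) : Prop :=
  linear f /\ forall (x : g) (v : V), f (gact x v) = gact x (f v).

Definition giso (V W : gmod) : Prop :=
  exists (f : V -> W) (h : W -> V), ghom f /\ ghom h /\ cancel f h /\ cancel h f.

Definition gsub (W V : gmod) : Prop :=
  exists f : W -> V, ghom f /\ injective f.

Definition trivial1 (V0 : gmod) : Prop :=
  (exists v0 : V0, v0 != 0 /\ forall v : V0, exists a : F, v = a *: v0) /\
  forall (x : g) (v : V0), gact x v = 0.

Definition is_dsum (V W S : gmod) (i1 : V -> S) (i2 : W -> S)
    (p1 : S -> V) (p2 : S -> W) : Prop :=
  [/\ ghom i1, ghom i2, ghom p1, ghom p2 &
   [/\ cancel i1 p1, cancel i2 p2, (forall v, p2 (i1 v) = 0),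
       (forall w, p1 (i2 w) = 0) & (forall s, i1 (p1 s) + i2 (p2 s) = s)]].

Definition bilinear_map (V W : lmodType F) (U : lmodType F) (b : V -> W -> U) :=
  (forall w, linear (b ^~ w)) /\ (forall v, linear (b v)).

Definition is_tensor (V W T : gmod) (b : V -> W -> T) : Prop :=
  [/\ bilinear_map b,
      (forall (U : lmodType F) (beta : V -> W -> U), bilinear_map beta ->
         exists h : T -> U, linear h /\ (forall v w, h (b v w) = beta v w) /\
           forall h' : T -> U, linear h' -> (forall v w, h' (b v w) = beta v w) ->
             h' =1 h) &
      forall (x : g) v w, gact x (b v w) = b (gact x v) w + b v (gact x w)].

Definition module_category (C : gmod -> Prop) : Prop :=
  [/\ (forall V W, C V -> giso V W -> C W),
      (forall V W, C V -> gsub W V -> C W),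
      (forall V W, C V -> C W ->
         exists S i1 i2 p1 p2, C S /\ @is_dsum V W S i1 i2 p1 p2),
      (forall V W, C V -> C W -> exists T b, C T /\ @is_tensor V W T b) &
      (exists V0, C V0 /\ trivial1 V0)] /\
  (forall x : g, (forall V, C V -> forall v : V, gact x v = 0) -> x = 0).

(* the category of duals: V^du is given as a predicate on functionals on V *)
Definition dual_category (C : gmod -> Prop) (du : forall V : gmod, (V -> F) -> Prop)
  : Prop :=
  [/\ (forall V, C V ->
        [/\ (forall phi, du V phi -> scalar phi),
            du V (fun _ => 0),
            (forall phi psi, du V phi -> du V psi -> du V (fun v => phi v + psi v)),
            (forall (a : F) phi, du V phi -> du V (fun v => a * phi v)) &
            (forall v : V, (forall phi, du V phi -> phi v = 0) -> v = 0)]),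
      (forall V, C V -> forall (x : g) phi, du V phi -> du V (fun v => phi (gact x v))),
      (forall (V W : gmod) (alpha : V -> W), C V -> C W -> ghom alpha ->
         forall psi, du W psi -> du V (fun v => psi (alpha v))),
      (forall V W S i1 i2 p1 p2, C V -> C W -> C S -> @is_dsum V W S i1 i2 p1 p2 ->
         forall phi : S -> F, du S phi <->
           exists phi1 phi2, [/\ du V phi1, du W phi2 &
              forall s, phi s = phi1 (p1 s) + phi2 (p2 s)]) &
      (forall V W T b, C V -> C W -> C T -> @is_tensor V W T b ->
         forall phi psi, du V phi -> du W psi ->
           exists chi, du T chi /\ forall v w, chi (b v w) = phi v * psi w)].

(* families (m_V)_V of endomorphisms; only their values on objects of C matter *)
Definition family := forall V : gmod, V -> V.

Variables (C : gmod -> Prop) (du : forall V : gmod, (V -> F) -> Prop).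
Arguments du : clear implicits.

Definition End_du (V : gmod) (f : V -> V) : Prop :=
  linear f /\ forall phi, du V phi -> du V (fun v => phi (f v)).

Definition isNat (m : family) : Prop :=
  (forall V, C V -> End_du (m V)) /\
  forall (V W : gmod) (alpha : V -> W), C V -> C W -> ghom alpha ->
    forall v, alpha (m V v) = m W (alpha v).

Definition inM (m : family) : Prop :=
  [/\ isNat m,
      (forall V W T b, C V -> C W -> C T -> @is_tensor V W T b ->
         forall v w, m T (b v w) = b (m V v) (m W w)) &
      (forall V0, C V0 -> trivial1 V0 -> forall v, m V0 v = v)].

Definition unitM (m : family) : Prop :=
  inM m /\ exists m', inM m' /\
    forall V, C V -> cancel (m V) (m' V) /\ cancel (m' V) (m V).

Definition Mpts := {m : family | inM m}.

(* F[M]: matrix coefficients f_{phi v}(m) = phi (m_V v), as functions on M *)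
Definition mcoef (V : gmod) (phi : V -> F) (v : V) : Mpts -> F :=
  fun m => phi (sval m V v).

Definition inFM (f : Mpts -> F) : Prop :=
  exists V phi v, [/\ C V, du V phi & f =1 @mcoef V phi v].

Definition is_delta (x : family) (delta : (Mpts -> F) -> F) : Prop :=
  forall V phi v, C V -> du V phi -> delta (@mcoef V phi v) = phi (x V v).

Definition LieM (x : family) : Prop :=
  [/\ isNat x,
      (forall V W T b, C V -> C W -> C T -> @is_tensor V W T b ->
         forall v w, x T (b v w) = b (x V v) w + b v (x W w)),
      (forall V0, C V0 -> trivial1 V0 -> forall v, x V0 v = 0) &
      exists delta, is_delta x delta].

Definition inI (N : family -> Prop) (f : Mpts -> F) : Prop :=
  inFM f /\ forall m : Mpts, N (sval m) -> f m = 0.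

Definition LieN (N : family -> Prop) (x : family) : Prop :=
  LieM x /\ forall delta, is_delta x delta -> forall f, inI N f -> delta f = 0.

(* N is Zariski dense in M: every Zariski closed subset of M containing N is M *)
Definition zariski_dense (N : family -> Prop) : Prop :=
  forall S : (Mpts -> F) -> Prop, (forall f, S f -> inFM f) ->
    (forall m : Mpts, N (sval m) -> forall f, S f -> f m = 0) ->
    forall m : Mpts, forall f, S f -> f m = 0.

Definition of_g (x : g) : family := fun V => gact x.

Definition good_for_integrating : Prop := forall x : g, LieM (of_g x).
Definition very_good_for_integrating : Prop := forall x : g, LieN unitM (of_g x).

End Modules.

(* Main.v *)
From HB Require Import structures.
Require Import Defs.
From mathcomp Require Import all_boot all_order all_algebra.
From Stdlib Require Import ClassicalEpsilon FunctionalExtensionality.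
Set Implicit Arguments. Unset Strict Implicit. Unset Printing Implicit Defensive.
Import GRing.Theory.
Local Open Scope ring_scope.

Definition subT (F : fieldType) (V : lmodType F) (S : pred V)
  (hS : GRing.subsemimod_closed S) : Type := {w : V | S w}.

HB.instance Definition _ (F : fieldType) (V : lmodType F) S hS :=
  SubType.copy (@subT F V S hS) {w : V | S w}.
HB.instance Definition _ (F : fieldType) (V : lmodType F) S hS :=
  Choice.copy (@subT F V S hS) {w : V | S w}.
HB.instance Definition _ (F : fieldType) (V : lmodType F) S hS :=
  GRing.SubChoice_isSubLmodule.Build F V S (@subT F V S hS) hS.


Definition subact (F : fieldType) (g : lieAlg F) (V : gmod g) (S : pred V)
  (hS : GRing.subsemimod_closed S) (hA : forall x w, S w -> S (gact x w))
  (x : g) (w : subT hS) : subT hS :=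
  exist (fun w => S w) (gact x (val w)) (hA x _ (valP w)).
Arguments subact [F g V S] hS hA x w.

Lemma subact_linl (F : fieldType) (g : lieAlg F) (V : gmod g) (S : pred V)
  (hS : GRing.subsemimod_closed S) (hA : forall x w, S w -> S (gact x w)) w :
  linear ((subact hS hA) ^~ w).
Proof. move=> a x y; apply: val_inj => /=; exact: gact_linl. Qed.

Lemma subact_linr (F : fieldType) (g : lieAlg F) (V : gmod g) (S : pred V)
  (hS : GRing.subsemimod_closed S) (hA : forall x w, S w -> S (gact x w)) x :
  linear (subact hS hA x).
Proof. move=> a u w; apply: val_inj => /=; exact: gact_linr. Qed.

Lemma subact_br (F : fieldType) (g : lieAlg F) (V : gmod g) (S : pred V)
  (hS : GRing.subsemimod_closed S) (hA : forall x w, S w -> S (gact x w)) x y v :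
  subact hS hA (bracket x y) v = subact hS hA x (subact hS hA y v) - subact hS hA y (subact hS hA x v).
Proof. apply: val_inj => /=; exact: gact_bracket. Qed.

Definition subG (F : fieldType) (g : lieAlg F) (V : gmod g) (S : pred V)
  (hS : GRing.subsemimod_closed S) (hA : forall x w, S w -> S (gact x w)) : gmod g :=
  @GMod F g (subT hS) (subact hS hA) (@subact_linl F g V S hS hA) (@subact_linr F g V S hS hA) (@subact_br F g V S hS hA).
Arguments subG [F g V S] hS hA.

Lemma subG_sub (F : fieldType) (g : lieAlg F) (V : gmod g) (S : pred V)
  (hS : GRing.subsemimod_closed S) (hA : forall x w, S w -> S (gact x w)) :
  ghom (fun w : subG hS hA => (val w : V)) /\ injective (fun w : subG hS hA => (val w : V)).
Proof. split; last exact: val_inj. by split. Qed.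

Lemma lin0 (F : fieldType) (U : lmodType F) (W : lmodType F) (f : U -> W) :
  linear f -> f 0 = 0.
Proof.
move=> hf; have := hf (-1) 0 0.
by rewrite scaler0 addr0 scaleN1r addNr => <-.
Qed.

Lemma scal0 (F : fieldType) (U : lmodType F) (f : U -> F) :
  scalar f -> f 0 = 0.
Proof.
move=> hf; have := hf (-1) 0 0.
by rewrite scaler0 addr0 mulN1r addNr => <-.
Qed.

Lemma linC (F : fieldType) (U W X : lmodType F) (f : W -> X) (h : U -> W) :
  linear f -> linear h -> linear (fun u => f (h u)).
Proof. by move=> hf hh a u v; rewrite hh hf. Qed.

Lemma scalC (F : fieldType) (U W : lmodType F) (f : W -> F) (h : U -> W) :
  scalar f -> linear h -> scalar (fun u => f (h u)).
Proof. by move=> hf hh a u v; rewrite hh hf. Qed.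

Definition idfam (F : fieldType) (g : lieAlg F) : Defs.family g := fun V v => v.
Definition compfam (F : fieldType) (g : lieAlg F) (m1 m2 : Defs.family g) : Defs.family g :=
  fun V v => m1 V (m2 V v).

Lemma idM (F : fieldType) (g : lieAlg F) (C : gmod g -> Prop)
  (du : forall V : gmod g, (V -> F) -> Prop) : inM C du (@idfam F g).
Proof.
split=> //; split=> // V CV; split=> //.
Qed.

Lemma compM (F : fieldType) (g : lieAlg F) (C : gmod g -> Prop)
  (du : forall V : gmod g, (V -> F) -> Prop) m1 m2 :
  inM C du m1 -> inM C du m2 -> inM C du (compfam m1 m2).
Proof.
move=> [[E1 N1] T1 R1] [[E2 N2] T2 R2]; split.
- split.
  + move=> V CV; have [l1 d1] := E1 V CV; have [l2 d2] := E2 V CV; split.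
      exact: linC.
    move=> phi dphi; exact: (d2 _ (d1 _ dphi)).
  + move=> V W alpha CV CW ha v; rewrite /compfam N1 // N2 //.
- move=> V W T b CV CW CT hT v w; rewrite /compfam T2 // T1 //.
- move=> V0 CV0 t v; rewrite /compfam R2 // R1 //.
Qed.

Lemma idU (F : fieldType) (g : lieAlg F) (C : gmod g -> Prop)
  (du : forall V : gmod g, (V -> F) -> Prop) : unitM C du (@idfam F g).
Proof. split; first exact: idM. exists (@idfam F g); split; first exact: idM. by []. Qed.

Lemma compU (F : fieldType) (g : lieAlg F) (C : gmod g -> Prop)
  (du : forall V : gmod g, (V -> F) -> Prop) m1 m2 :
  unitM C du m1 -> unitM C du m2 -> unitM C du (compfam m1 m2).
Proof.
move=> [M1 [m1' [M1' H1]]] [M2 [m2' [M2' H2]]]; split; first exact: compM.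
exists (compfam m2' m1'); split; first exact: compM.
move=> V CV; have [c1 c1'] := H1 V CV; have [c2 c2'] := H2 V CV.
by split=> v; rewrite /compfam ?c1 ?c2 ?c1' ?c2'.
Qed.

Definition pb (P : Prop) : bool := if excluded_middle_informative P then true else false.
Lemma pbP (P : Prop) : pb P <-> P.
Proof. by rewrite /pb; case: excluded_middle_informative. Qed.

Lemma dense_Lie (F : fieldType) (g : lieAlg F)
    (C : gmod g -> Prop) (du : forall V : gmod g, (V -> F) -> Prop)
    (hdu : dual_category C du) :
  zariski_dense C du (unitM C du) -> forall x, LieN C du (unitM C du) x <-> LieM C du x.
Proof.
move=> hd x; split; first by case.
move=> hx; split=> // delta hdelta f [[V [phi [v [CV dphi feq]]]] hvan].
have f0 : forall m, f m = 0.
  move=> m; apply: (hd (fun h => h = f)) => //.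
  - by move=> h ->; exists V, phi, v.
  - by move=> m' um h ->; apply: hvan.
have -> : f = @mcoef F g C du V (fun _ => 0) v.
  by apply: functional_extensionality => m; rewrite f0.
have [A _ _ _ _] := hdu; have [_ du0 _ _ _] := A V CV.
by rewrite hdelta.
Qed.

Lemma vg_dense (F : fieldType) (g : lieAlg F)
    (C : gmod g -> Prop) (du : forall V : gmod g, (V -> F) -> Prop)
    (hC : module_category C) (hdu : dual_category C du) :
  very_good_for_integrating C du -> zariski_dense C du (unitM C du).
Proof.
move=> vg S HS hvan m f Sf.
have [V [phi [v [CV dphi feq]]]] := HS f Sf.
rewrite feq /mcoef.
have [A _ _ _ _] := hdu; have [phis _ _ _ _] := A V CV.
have phil := phis phi dphi.
pose P := fun w : V => forall u, unitM C du u -> phi (u V w) = 0.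
pose Sb := fun w : V => pb (P w).
have uEnd : forall u, unitM C du u -> End_du du (u V).
  by move=> u [[[E _] _ _] _]; exact: E.
have hS : GRing.subsemimod_closed (Sb : pred V).
  split; [split|].
  - rewrite unfold_in /Sb; apply/pbP => u uu; have [ul _] := uEnd u uu.
    by rewrite lin0 // scal0.
  - move=> a b; rewrite !unfold_in /Sb => /pbP Pa /pbP Pb; apply/pbP => u uu.
    have [ul _] := uEnd u uu.
    have := ul 1 a b; rewrite !scale1r => ->.
    have := phil 1 (u V a) (u V b); rewrite !scale1r mul1r => ->.
    by rewrite Pa // Pb // addr0.
  - move=> c a; rewrite !unfold_in /Sb => /pbP Pa; apply/pbP => u uu.
    have [ul _] := uEnd u uu.
    have := ul c a 0; rewrite !addr0 lin0 // addr0 => ->.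
    have := phil c (u V a) 0; rewrite !addr0 scal0 // addr0 => ->.
    by rewrite Pa // mulr0.
have hA : forall x w, Sb w -> Sb (gact x w).
  move=> x w /pbP Pw; apply/pbP => u uu.
  have [[_ _ _ [delta hdelta]] hN] := vg x.
  have [ul udu] := uEnd u uu.
  have I : inI (unitM C du) (@mcoef F g C du V (fun w => phi (u V w)) w).
    split; first by exists V, (fun w => phi (u V w)), w; split => //; apply: udu.
    move=> m' um'; rewrite /mcoef.
    exact: (Pw (compfam u (sval m')) (compU uu um')).
  have := hN delta hdelta _ I.
  by rewrite hdelta //; apply: udu.
have [[_ hsub _ _ _] _] := hC.
have [hi hinj] := subG_sub hS hA.
have CW : C (subG hS hA).
  apply: (hsub V _ CV); rewrite /gsub; by exists (fun w : subG hS hA => (val w : V)).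
have Sv : Sb v.
  apply/pbP => u uu; have := hvan (exist _ u uu.1) uu f Sf.
  by rewrite feq.
pose wv : subG hS hA := exist (fun w => Sb w) v Sv.
have [[_ Nm] _ _] := svalP m.
have := valP (sval m _ wv).
have -> : val (sval m _ wv) = sval m V v by exact: (Nm _ _ _ CW CV hi wv).
move=> /pbP Pm; exact: (Pm _ (idU C du)).
Qed.

Unset Implicit Arguments.
Local Close Scope ring_scope.

Theorem proposition2p9 (F : fieldType) (hF : [pchar F]%R =i pred0) (g : lieAlg F)
    (C : gmod g -> Prop) (du : forall V : gmod g, (V -> F) -> Prop)
    (hC : module_category C) (hdu : dual_category C du) :
  [/\ (very_good_for_integrating C du <->
         good_for_integrating C du /\
         (forall x, LieN C du (unitM C du) x <-> LieM C du x)),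
      (very_good_for_integrating C du <->
         good_for_integrating C du /\ zariski_dense C du (unitM C du)) &
      (good_for_integrating C du /\
         (forall x, LieN C du (unitM C du) x <-> LieM C du x) <->
       good_for_integrating C du /\ zariski_dense C du (unitM C du))].
Proof.
have vgg : very_good_for_integrating C du -> good_for_integrating C du.
  by move=> h x; case: (h x).
split.
- split=> [h|[gd e] x].
    split; first exact: vgg.
    apply: dense_Lie => //; exact: vg_dense.
  by apply/e; exact: gd.
- split=> [h|[gd d] x]; first by split; [exact: vgg | exact: vg_dense].
  exact: ((dense_Lie hdu d (of_g x)).2 (gd x)).
- split=> [[gd e]|[gd d]]; split=> //.
    apply: vg_dense => // x; apply/e; exact: gd.
  exact: dense_Lie.
Qed.
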